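(* For every prime power $q$ and every integer $m$ with $1\leq m\leq q-1$, $$\sum_{i=0}^{m}\binom{q}{i}\sum_{d=i}^{m}\sum_{k=0}^{d-i}(-1)^k\binom{q-i}{k}q^{d-i-k}=\frac{q^{m+1}-1}{q-1}.$$ *)

(* Defs.v *)
From mathcomp Require Import all_boot all_order all_algebra.
Set Implicit Arguments. Unset Strict Implicit. Unset Printing Implicit Defensive.
Import Order.TTheory GRing.Theory Num.Theory.

Definition prime_power (q : nat) : Prop :=
  exists p e : nat, prime p /\ (0 < e)%N /\ q = (p ^ e)%N.

(* Main.v *)
Require Import Defs.
From mathcomp Require Import all_boot all_order all_algebra.
From mathcomp Require Import ring zify.
Import Order.TTheory GRing.Theory Num.Theory.
Local Open Scope ring_scope.

Lemma binprod (q i s : nat) : (i <= s)%N ->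
  ('C(q, i) * 'C(q - i, s - i) = 'C(q, s) * 'C(s, i))%N.
Proof.
move=> his.
case: (leqP s q) => hsq; last first.
  case: (leqP i q) => hiq.
    rewrite (@bin_small (q - i)) ?(@bin_small q s) ?muln0 ?mul0n //; lia.
  rewrite (@bin_small q i) ?(@bin_small q s) ?mul0n //.
have hiq : (i <= q)%N by lia.
have hpos : (0 < i`! * (s - i)`! * (q - s)`!)%N.
  by rewrite !muln_gt0 !fact_gt0.
apply/eqP; rewrite -(eqn_pmul2r hpos); apply/eqP.
have e1 := bin_fact hiq. have e2 := @bin_fact (q - i) (s - i).
have e3 := bin_fact hsq. have e4 := bin_fact his.
have eqs : (q - i - (s - i) = q - s)%N by lia.
rewrite eqs in e2.
have h2 := e2 ltac:(lia).
transitivity ('C(q, i) * (i`! * ('C(q - i, s - i) * ((s - i)`! * (q - s)`!))))%N.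
  ring.
rewrite h2 e1.
transitivity ('C(q, s) * (('C(s, i) * (i`! * (s - i)`!)) * (q - s)`!))%N.
  by rewrite e4 e3.
ring.
Qed.

Lemma altsum (s : nat) : (0 < s)%N ->
  \sum_(0 <= i < s.+1) ('C(s, i))%:R * (-1 : rat) ^+ (s - i) = 0.
Proof.
move=> hs.
have := exprDn (-1 : rat) 1 s.
rewrite addNr expr0n (negbTE (lt0n_neq0 hs)) /= => H.
rewrite big_mkord -[RHS](mulr0n 1) H; apply: eq_bigr => i _. idtac.
by rewrite expr1n mulr1 mulr_natl.
Qed.

Section S.
Variable q : nat.
Definition F (i j : nat) : rat :=
  \sum_(0 <= k < j.+1) (-1) ^+ k * ('C(q - i, k))%:R * (q%:R) ^+ (j - k).

Lemma Frec i j : F i j.+1 = q%:R * F i j + (-1) ^+ j.+1 * ('C(q - i, j.+1))%:R.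
Proof.
rewrite /F big_nat_recr //= subnn expr0 mulr1; congr (_ + _).
rewrite big_distrr /=; apply: eq_big_nat => k /andP[_ hk].
rewrite subSn // exprS; ring.
Qed.

Definition A (d : nat) : rat := \sum_(0 <= i < d.+1) ('C(q, i))%:R * F i (d - i).

Lemma Aval d : A d = q%:R ^+ d.
Proof.
elim: d => [|d IH].
  by rewrite /A big_nat1 /F big_nat1 !subn0 !bin0 !expr0 !mulr1.
rewrite /A big_nat_recr //= subnn.
have -> : F d.+1 0 = 1 by rewrite /F big_nat1 !subn0 !bin0 !expr0 !mulr1.
rewrite (@eq_big_nat _ _ _ 0 d.+1 _ (fun i => q%:R * (('C(q, i))%:R * F i (d - i))
   + ('C(q, i))%:R * ((-1) ^+ (d.+1 - i) * ('C(q - i, d.+1 - i))%:R))); last first.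
  move=> i /andP[_ hi]; rewrite subSn // Frec; ring.
rewrite big_split /= -big_distrr /= -/(A d) IH exprS.
rewrite -[RHS]addr0 -addrA; congr (_ + _).
have := @altsum d.+1 (ltn0Sn d); rewrite big_nat_recr //= subnn expr0 binn mulr1 => H.
transitivity (('C(q, d.+1))%:R * (\sum_(0 <= i < d.+1) ('C(d.+1, i))%:R * (-1 : rat) ^+ (d.+1 - i) + 1)).
  rewrite mulrDr mulr1 big_distrr; congr (_ + _); apply: eq_big_nat => i /andP[_ hi].
  have := @binprod q i d.+1 (ltnW hi); move/(congr1 (fun n : nat => n%:R : rat)).
  rewrite !natrM => E.
  transitivity (((-1 : rat) ^+ (d.+1 - i)) * (('C(q, i))%:R * ('C(q - i, d.+1 - i))%:R)); first ring.
  by rewrite E mulrC -mulrA.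
by rewrite H mulr0.
Qed.

Lemma Bval m : \sum_(0 <= i < m.+1)
     ('C(q, i))%:R *
     \sum_(i <= d < m.+1)
        \sum_(0 <= k < (d - i).+1)
           (-1) ^+ k * ('C(q - i, k))%:R * (q%:R) ^+ (d - i - k)
  = \sum_(0 <= d < m.+1) (q%:R : rat) ^+ d.
Proof.
elim: m => [|m IH].
  by rewrite !big_nat1 !subn0 !bin0 !expr0 !mulr1.
rewrite [RHS]big_nat_recr // -IH -(Aval m.+1) /A.
rewrite [LHS]big_nat_recr // [X in _ = _ + X]big_nat_recr // addrA.
congr (_ + _); last first.
  by rewrite big_nat1 /F subnn.
rewrite -big_split /=; apply: eq_big_nat => i /andP[_ hi].
rewrite (big_nat_recr _ _ _ (ltnW hi)) /= mulrDr; congr (_ + _).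
Qed.
End S.

Theorem mainTheorem2 (q m : nat) :
  prime_power q -> (1 <= m)%N -> (m <= q - 1)%N ->
  \sum_(0 <= i < m.+1)
     ('C(q, i))%:R *
     \sum_(i <= d < m.+1)
        \sum_(0 <= k < (d - i).+1)
           (-1) ^+ k * ('C(q - i, k))%:R * (q%:R) ^+ (d - i - k)
  = ((q%:R : rat) ^+ m.+1 - 1) / (q%:R - 1).
Proof.
move=> [p [e [pp [he ->]]]] _ _.
rewrite Bval.
have hq : (1 < p ^ e)%N.
  by rewrite -(expn0 p) ltn_exp2l ?prime_gt1.
have hne : ((p ^ e)%:R - 1 : rat) != 0.
  by rewrite subr_eq0 pnatr_eq1; apply/eqP => h; rewrite h in hq.
apply: (canRL (mulfK hne)).
rewrite -[X in _ = _ - X](expr1n _ m.+1) subrXX /= mulrC big_mkord; congr (_ * _).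
rewrite [RHS](reindex_inj rev_ord_inj); apply: eq_bigr => i _ /=.
rewrite expr1n mulr1 subSS (subKn (ltnSE (ltn_ord i))).
reflexivity.
Qed.
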